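(* Let $G=G_1\times\cdots\times G_m$ be a group, let $U\subset G$ be finite, and let $U_i$ be the projection of $U$ to the factor $G_i$. Suppose there exist $\alpha,\beta>0$ such that $|U_i^n|\geqslant(\alpha|U_i|)^{\beta n}$ for every $n\in\mathbb{N}$ and every $i\in\{1,\dots,m\}$. Then $|U^n|\geqslant(\alpha^m|U|)^{(\beta/m)n}$ for every $n\in\mathbb{N}$.
   Context: $U^n=\{u_1\cdots u_n:u_i\in U\}$. *)

(* Defs.v *)
From HB Require Import structures.
From mathcomp Require Import all_boot all_order all_algebra.
From mathcomp Require Import finmap.
From mathcomp Require Import reals exp.
Set Implicit Arguments. Unset Strict Implicit. Unset Printing Implicit Defensive.

Local Open Scope fset_scope.

Fixpoint fset_pow (T : choiceType) (one : T) (mul : T -> T -> T)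
    (U : {fset T}) (n : nat) : {fset T} :=
  match n with
  | 0 => [fset one]
  | n'.+1 => [fset mul x y | x in fset_pow one mul U n', y in U]
  end.

Definition gpow (G : groupType) (U : {fset G}) (n : nat) : {fset G} :=
  fset_pow (1%g : G) (fun x y => (x * y)%g) U n.

Definition prodG (m : nat) (G : 'I_m -> groupType) : choiceType :=
  {dffun forall i : 'I_m, G i}.

Definition prod_one (m : nat) (G : 'I_m -> groupType) : prodG G :=
  [ffun i => (1%g : G i)].

Definition prod_mul (m : nat) (G : 'I_m -> groupType) (x y : prodG G) : prodG G :=
  [ffun i => (x i * y i)%g].

Definition ppow (m : nat) (G : 'I_m -> groupType) (U : {fset prodG G}) (n : nat)
  : {fset prodG G} := fset_pow (prod_one G) (@prod_mul m G) U n.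

Definition proj (m : nat) (G : 'I_m -> groupType) (U : {fset prodG G}) (i : 'I_m)
  : {fset G i} := [fset (x : prodG G) i | x in U].

(* Main.v *)
Require Import Defs.
From HB Require Import structures.
From mathcomp Require Import all_boot all_order all_algebra.
From mathcomp Require Import finmap.
From mathcomp Require Import reals exp.
From mathcomp Require Import ring.
Import Order.TTheory GRing.Theory Num.Theory.
Local Open Scope ring_scope.
Local Open Scope fset_scope.

Lemma proj_ppow (m : nat) (G : 'I_m -> groupType) (U : {fset prodG G}) i n :
  gpow (proj U i) n = [fset (x : prodG G) i | x in ppow U n].
Proof.
elim: n => [|n IH].
  apply/fsetP => z; apply/idP/idP.
    by rewrite inE => /eqP ->; apply/imfsetP; exists (prod_one G); rewrite ?inE //= /prod_one ffunE.
  by case/imfsetP => x /=; rewrite !inE => /eqP -> ->; rewrite /prod_one ffunE.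
apply/fsetP => z; rewrite /gpow /= -/(gpow _ _) IH; apply/idP/idP.
  case/imfset2P => a /imfsetP [x /= xin ->] [b /imfsetP [y /= yin ->] ->].
  apply/imfsetP; exists (prod_mul x y); last by rewrite /prod_mul ffunE.
  by apply/imfset2P; exists x => //; exists y.
case/imfsetP => w /= /imfset2P [x xin [y yin ->]] ->.
rewrite /prod_mul ffunE; apply/imfset2P; exists (x i).
  by apply/imfsetP; exists x.
by exists (y i) => //; apply/imfsetP; exists y.
Qed.

Lemma card_proj_le (m : nat) (G : 'I_m -> groupType) (U : {fset prodG G}) i n :
  (#|` gpow (proj U i) n| <= #|` ppow U n|)%N.
Proof.
rewrite proj_ppow; apply: leq_trans (leq_imfset_card _ _ _) _.
by [].
Qed.

Lemma card_le_prod (m : nat) (G : 'I_m -> groupType) (U : {fset prodG G}) :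
  (#|` U| <= \prod_(i < m) #|` proj U i|)%N.
Proof.
pose rT := fun i => proj U i.
have memp : forall (x : U) i, (val x : prodG G) i \in proj U i.
  by move=> x i; apply/imfsetP; exists (val x) => //; apply: valP.
pose phi (x : U) : {dffun forall i : 'I_m, rT i} := [ffun i => [` memp x i]].
have phi_inj : injective phi.
  move=> x y /ffunP H; apply: val_inj; apply/ffunP => i.
  by have := H i; rewrite !ffunE => /(congr1 val).
rewrite cardfE -(card_codom phi_inj).
apply: leq_trans (max_card _) _.
rewrite card_dep_ffun foldrE big_map big_enum /=.
by apply: eq_leq; apply: eq_bigr => i _; rewrite cardfE.
Qed.

Local Close Scope fset_scope.


Lemma powR_prod (R : realType) (I : Type) (r : seq I) (a : I -> R) e :
  (forall i, 0 <= a i) -> (\prod_(i <- r) a i) `^ e = \prod_(i <- r) (a i `^ e).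
Proof.
move=> a0; elim: r => [|j r IH]; first by rewrite !big_nil powR1.
rewrite !big_cons powRM ?IH //; apply: prodr_ge0 => i _; exact: a0.
Qed.

Theorem corollary2p23 (R : realType) (m : nat) (G : 'I_m -> groupType)
    (U : {fset prodG G}) (alpha beta : R) :
  (0 < m)%N -> 0 < alpha -> 0 < beta ->
  (forall (n : nat) (i : 'I_m),
      (alpha * #|` proj U i|%:R) `^ (beta * n%:R) <= #|` gpow (proj U i) n|%:R) ->
  forall n : nat,
    (alpha ^+ m * #|` U|%:R) `^ ((beta / m%:R) * n%:R) <= #|` ppow U n|%:R.
Proof.
move=> m0 a0 b0 H n.
set N : R := #|` ppow U n|%:R.
set x := alpha ^+ m * #|` U|%:R.
have x0 : 0 <= x by rewrite mulr_ge0 // exprn_ge0 // ltW.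
have e0 : 0 <= beta * n%:R by rewrite mulr_ge0 // ltW.
rewrite -(ler_pXn2r m0) ?nnegrE ?powR_ge0 //.
rewrite -powR_mulrn ?powR_ge0 // -powRrM.
have -> : beta / m%:R * n%:R * m%:R = beta * n%:R.
  by field; rewrite pnatr_eq0 -lt0n.
apply: (@le_trans _ _ ((\prod_(i < m) (alpha * #|` proj U i|%:R)) `^ (beta * n%:R))).
  apply: ge0_ler_powR => //; rewrite ?nnegrE //.
    by apply: prodr_ge0 => i _; rewrite mulr_ge0 // ltW.
  rewrite big_split /= prodr_const card_ord /x; apply: ler_wpM2l.
    by rewrite exprn_ge0 ?ltW.
  by rewrite -natr_prod ler_nat card_le_prod.
rewrite powR_prod; last by move=> i; rewrite mulr_ge0 // ltW.
have -> : N ^+ m = \prod_(i < m) N by rewrite prodr_const card_ord.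
apply: ler_prod => i _; rewrite powR_ge0 /=.
apply: le_trans (H n i) _.
by rewrite /N ler_nat card_proj_le.
Qed.
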